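(* Let $G$ be a finite group with identity $e$, $R[G]$ its real group algebra, $S=\{x\in R[G]:\sum_gx_g=1,\ x_g\ge0\ \forall g\}$, and let $(p^{[n]}(t))_{n\in\mathbb N}$, $p^{[n]}(t)=\sum_{k=0}^\infty a_k^{[n]}t^k$, be any sequence of real power series with $\sum_k|a_k^{[n]}|<\infty$ for each $n$ and $\lim_{n\to\infty}\sup\{|a_k^{[n]}|:k\ge1\}=0$. Then for every $x\in S$, either neither of the limits $\lim_{n\to\infty}p^{[n]}(x)$, $\lim_{n\to\infty}p^{[n]}(xc_x)$ exists, or both exist and $\lim_{n\to\infty}p^{[n]}(x)=\lim_{n\to\infty}p^{[n]}(xc_x)$.
   Context: For $y\in S$, $p^{[n]}(y)=a_0^{[n]}e+\sum_{k\ge1}a_k^{[n]}y^k$ (convergent); Euclidean topology on $R[G]$. $\mathrm{Supp}(y)=\{g:y_g\ne0\}$; for $x\in S$, $n_x=\min\{k\ge1:(x^k)_e\ne0\}$, $G_x$ is the subgroup generated by $\mathrm{Supp}(x^{n_x})$, and $c_x=\frac1{|G_x|}\sum_{g\in G_x}g$. *)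

(* Defs.v *)
From HB Require Import structures.
From mathcomp Require Import all_boot all_order all_algebra all_fingroup.
From mathcomp Require Import all_classical all_reals all_analysis.
Set Implicit Arguments. Unset Strict Implicit. Unset Printing Implicit Defensive.
Import Order.TTheory GRing.Theory Num.Theory numFieldNormedType.Exports.
Local Open Scope ring_scope.
Local Open Scope classical_set_scope.

Section GroupAlgebra.
Variables (R : realType) (gT : finGroupType).

Definition ga := {ffun gT -> R}.

Definition ga_one : ga := [ffun g => if g == 1%g then 1 else 0].

Definition ga_mul (x y : ga) : ga :=
  [ffun g => \sum_(h : gT) x h * y (h^-1 * g)%g].

Definition ga_pow (y : ga) (k : nat) : ga := iter k (ga_mul y) ga_one.

Definition in_S (x : ga) : Prop :=
  \sum_(g : gT) x g = 1 /\ forall g, 0 <= x g.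

(* p(y) = a_0 e + sum_{k>=1} a_k y^k, evaluated coordinatewise as the limit
   of partial sums (convergent for y in S when sum_k |a_k| < oo). *)
Definition peval (a : nat -> R) (y : ga) : ga :=
  [ffun g => limn (series (fun k => a k * ga_pow y k g))].

Definition supp (y : ga) : {set gT} := [set g | y g != 0].

Definition n_x (x : ga) : nat :=
  match pselect (exists k, (0 < k)%N && (ga_pow x k 1%g != 0)) with
  | left H => ex_minn H
  | right _ => 0%N
  end.

Definition G_x (x : ga) : {group gT} := <<supp (ga_pow x (n_x x))>>%G.

Definition c_x (x : ga) : ga :=
  [ffun g => if g \in G_x x then (#|G_x x|%:R)^-1 else 0].

(* convergence in R[G] (Euclidean topology = coordinatewise convergence) *)
Definition ga_cvg (u : nat -> ga) (L : ga) : Prop :=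
  forall g, (fun n => u n g) @ \oo --> L g.

End GroupAlgebra.

(* Main.v *)
Require Import Defs.
From HB Require Import structures.
From mathcomp Require Import all_boot all_order all_algebra all_fingroup.
From mathcomp Require Import all_classical all_reals all_analysis.
From mathcomp Require Import ring lra.
Import Order.TTheory GRing.Theory Num.Theory numFieldNormedType.Exports.
Set Implicit Arguments. Unset Strict Implicit.

Section GA.
Local Open Scope ring_scope.
Local Open Scope classical_set_scope.

Variables (R : realType) (gT : finGroupType).
Local Notation ga := (ga R gT).
Implicit Types x y z : ga.

Lemma gmE x y g : ga_mul x y g = \sum_(h : gT) x h * y (h^-1 * g)%g.
Proof. by rewrite ffunE. Qed.

Lemma gmA x y z : ga_mul (ga_mul x y) z = ga_mul x (ga_mul y z).
Proof.
apply/ffunP => g; rewrite !gmE.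
under eq_bigr do rewrite gmE big_distrl.
rewrite exchange_big; apply: eq_bigr => h _ /=.
rewrite gmE big_distrr (reindex_inj (mulgI h)); apply: eq_bigr => m _ /=.
by rewrite mulKg invMg mulgA mulrA.
Qed.

Lemma gm1l y : ga_mul (ga_one R gT) y = y.
Proof.
apply/ffunP => g; rewrite gmE (bigD1 1%g) //= big1 => [|h /negbTE hn].
  by rewrite ffunE eqxx mul1r invg1 mul1g addr0.
by rewrite ffunE hn mul0r.
Qed.

Lemma gm1r y : ga_mul y (ga_one R gT) = y.
Proof.
apply/ffunP => g; rewrite gmE (bigD1 g) //= big1 => [|h hn].
  by rewrite ffunE mulVg eqxx mulr1 addr0.
by rewrite ffunE -eq_mulVg1 (negbTE hn) mulr0.
Qed.

Definition gsub x y : ga := [ffun g => x g - y g].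
Definition gscale (r : R) x : ga := [ffun g => r * x g].

Lemma gmBl x y z : ga_mul (gsub x y) z = gsub (ga_mul x z) (ga_mul y z).
Proof.
apply/ffunP => g; rewrite !ffunE -sumrB; apply: eq_bigr => h _.
by rewrite ffunE mulrBl.
Qed.

Lemma gmBr x y z : ga_mul x (gsub y z) = gsub (ga_mul x y) (ga_mul x z).
Proof.
apply/ffunP => g; rewrite !ffunE -sumrB; apply: eq_bigr => h _.
by rewrite ffunE mulrBr.
Qed.

Lemma gmZr r x y : ga_mul x (gscale r y) = gscale r (ga_mul x y).
Proof.
apply/ffunP => g; rewrite !ffunE big_distrr; apply: eq_bigr => h _ /=.
by rewrite ffunE mulrCA.
Qed.

Lemma gpS y k : ga_pow y k.+1 = ga_mul y (ga_pow y k).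
Proof. by []. Qed.

Lemma gp0 y : ga_pow y 0 = ga_one R gT.
Proof. by []. Qed.

Lemma gpD y m k : ga_pow y (m + k) = ga_mul (ga_pow y m) (ga_pow y k).
Proof.
elim: m => [|m IH]; first by rewrite add0n gp0 gm1l.
by rewrite addSn !gpS IH gmA.
Qed.

Lemma gpSr y k : ga_pow y k.+1 = ga_mul (ga_pow y k) y.
Proof. by rewrite -addn1 gpD /= gm1r. Qed.

Lemma gpM y m k : ga_pow y (m * k) = ga_pow (ga_pow y m) k.
Proof.
elim: k => [|k IH]; first by rewrite muln0.
by rewrite mulnS gpD IH gpS.
Qed.

Lemma gp_comm y c : ga_mul y c = ga_mul c y ->
  forall k, ga_mul (ga_pow y k) c = ga_mul c (ga_pow y k).
Proof.
move=> hc; elim => [|k IH]; first by rewrite gp0 gm1l gm1r.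
by rewrite gpS gmA IH -gmA hc gmA.
Qed.

Lemma gp_mulc y c : ga_mul y c = ga_mul c y -> ga_mul c c = c ->
  forall k, ga_pow (ga_mul y c) k.+1 = ga_mul (ga_pow y k.+1) c.
Proof.
move=> hc hcc; elim => [|k IH]; first by rewrite /= !gm1r.
rewrite [LHS]gpS IH gmA -(gmA c) -gp_comm // (gmA (ga_pow y k.+1)) hcc.
by rewrite -gmA -gpS.
Qed.

End GA.


Section GB.
Local Open Scope ring_scope.
Local Open Scope classical_set_scope.

Variables (R : realType) (gT : finGroupType).
Local Notation ga := (ga R gT).
Implicit Types x y z : ga.

Definition gnn x := forall g, 0 <= x g.
Definition gsum x := \sum_(g : gT) x g.
Definition gl1 x := \sum_(g : gT) `|x g|.

Lemma one_ge0 : gnn (ga_one R gT).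
Proof. by move=> g; rewrite ffunE; case: ifP. Qed.

Lemma gm_ge0 x y : gnn x -> gnn y -> gnn (ga_mul x y).
Proof. by move=> hx hy g; rewrite gmE; apply: sumr_ge0 => h _; apply: mulr_ge0. Qed.

Lemma gp_ge0 x k : gnn x -> gnn (ga_pow x k).
Proof. by move=> hx; elim: k => [|k IH]; [apply: one_ge0 | apply: gm_ge0]. Qed.

Lemma sum_shift (F : gT -> R) h : \sum_(g : gT) F (h^-1 * g)%g = \sum_(g : gT) F g.
Proof. by rewrite (reindex_inj (mulgI h)); apply: eq_bigr => g _; rewrite mulKg. Qed.

Lemma gsum_mul x y : gsum (ga_mul x y) = gsum x * gsum y.
Proof.
rewrite /gsum; under eq_bigr do rewrite gmE.
rewrite exchange_big big_distrl; apply: eq_bigr => h _ /=.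
by rewrite -big_distrr /= (sum_shift (fun g => y g)).
Qed.

Lemma gsum_one : gsum (ga_one R gT) = 1.
Proof.
rewrite /gsum (bigD1 1%g) //= big1 => [|g /negbTE hg]; first by rewrite ffunE eqxx addr0.
by rewrite ffunE hg.
Qed.

Lemma gsum_pow x k : gsum x = 1 -> gsum (ga_pow x k) = 1.
Proof.
move=> hx; elim: k => [|k IH]; first exact: gsum_one.
by rewrite gpS gsum_mul hx IH mulr1.
Qed.

Lemma gl1_ge0_msum x : gnn x -> gl1 x = gsum x.
Proof. by move=> hx; apply: eq_bigr => g _; rewrite ger0_norm. Qed.

Lemma gl1_mul x y : gl1 (ga_mul x y) <= gl1 x * gl1 y.
Proof.
rewrite /gl1; under eq_bigr do rewrite gmE.
apply: (@le_trans _ _ (\sum_(g : gT) \sum_(h : gT) `|x h| * `|y (h^-1 * g)%g|)).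
  apply: ler_sum => g _; apply: le_trans (ler_norm_sum _ _ _) _.
  by apply: ler_sum => h _; rewrite normrM.
rewrite exchange_big big_distrl; apply: ler_sum => h _ /=.
by rewrite -big_distrr /= (sum_shift (fun g => `|y g|)).
Qed.

Lemma coord_le_l1 x g : `|x g| <= gl1 x.
Proof.
rewrite /gl1 (bigD1 g) //= lerDl; apply: sumr_ge0 => h _; exact: normr_ge0.
Qed.

Lemma gl1_sub x y : gl1 (gsub x y) <= gl1 x + gl1 y.
Proof.
rewrite /gl1 -big_split /=; apply: ler_sum => g _; rewrite ffunE.
exact: ler_normB.
Qed.

Lemma gm_pos x y a b : gnn x -> gnn y -> x a * y b <= ga_mul x y (a * b)%g.
Proof.
move=> hx hy; rewrite gmE (bigD1 a) //= mulKg lerDl.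
by apply: sumr_ge0 => h _; apply: mulr_ge0.
Qed.

Lemma gm_supp x y g : ga_mul x y g != 0 ->
  exists h, x h != 0 /\ y (h^-1 * g)%g != 0.
Proof.
rewrite gmE => /eqP hs; apply: contrapT => hn; apply: hs.
apply: big1 => h _; apply/eqP; rewrite mulf_eq0.
apply/negPn/negP; rewrite negb_or => /andP[h1 h2]; apply: hn; by exists h.
Qed.

Lemma gp_pos_pow x g k : gnn x -> x g ^+ k <= ga_pow x k (g ^+ k)%g.
Proof.
move=> hx; elim: k => [|k IH]; first by rewrite expr0 expg0 ffunE eqxx.
rewrite exprS expgS gpS.
have h2 := gm_pos (y := ga_pow x k) g (g ^+ k)%g hx (gp_ge0 k hx).
apply: le_trans h2; apply: ler_wpM2l => //.
Qed.

End GB.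


Section GC.
Local Open Scope ring_scope.
Local Open Scope classical_set_scope.

Variables (R : realType) (gT : finGroupType).
Local Notation ga := (ga R gT).
Variable x : ga.
Hypothesis hx0 : gnn x.
Hypothesis hx1 : gsum x = 1.

Lemma pos_of_ne0 (y : ga) g : gnn y -> y g != 0 -> 0 < y g.
Proof. by move=> hy hn; rewrite lt0r hn hy. Qed.

Lemma coord_le1 (y : ga) g : gnn y -> gsum y = 1 -> y g <= 1.
Proof.
move=> hy h1; rewrite -h1 /gsum (bigD1 g) //= lerDl.
by apply: sumr_ge0 => h _.
Qed.

Lemma ex_return : exists k, (0 < k)%N && (ga_pow x k 1%g != 0).
Proof.
have [g hg] : exists g, x g != 0.
  case: (pselect (exists g, x g != 0)) => // hn; exfalso; move: hx1; rewrite /gsum big1 => [/eqP|g _].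
    by rewrite eq_sym oner_eq0.
  by case: (eqVneq (x g) 0) => // hg; exfalso; apply: hn; exists g.
exists #[g]%g; rewrite order_gt0 /=.
have := gp_pos_pow g #[g]%g hx0; rewrite expg_order => hle.
rewrite gt_eqF //; apply: lt_le_trans hle.
by apply: exprn_gt0; apply: pos_of_ne0.
Qed.

Lemma nx_spec : (0 < n_x x)%N /\ ga_pow x (n_x x) 1%g != 0.
Proof.
rewrite /n_x; case: pselect => [H|H]; last by exfalso; apply: H; exact: ex_return.
by case: ex_minnP => m /andP[h1 h2] _.
Qed.

Local Notation n := (n_x x).
Local Notation y := (ga_pow x n).
Local Notation H := (G_x x).

Lemma suppE (v : ga) g : (g \in supp v) = (v g != 0).
Proof. by rewrite inE. Qed.

Lemma supp_yj j g : ga_pow y j g != 0 -> g \in H.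
Proof.
elim: j g => [|j IH] g.
  by rewrite gp0 /ga_one ffunE; case: (eqVneq g 1%g) => [-> _|_]; [exact: group1 | rewrite eqxx].
rewrite gpS => /gm_supp [h [h1 h2]].
have hH : h \in H by apply: mem_gen; rewrite suppE.
by rewrite -(mulKVg h g) groupMl // IH.
Qed.

Lemma supp_xnj j g : ga_pow x (n * j) g != 0 -> g \in H.
Proof. by rewrite gpM; apply: supp_yj. Qed.

Lemma y_ge0 : gnn y. Proof. exact: gp_ge0. Qed.

Lemma y1_pos : 0 < y 1%g.
Proof. by apply: pos_of_ne0; [exact: y_ge0 | case: nx_spec]. Qed.

Definition Bs (i : nat) : {set gT} := supp (ga_pow y (2 ^ i)).

Lemma Bs1 i : 1%g \in Bs i.
Proof.
rewrite suppE gt_eqF //; have := gp_pos_pow 1%g (2 ^ i) y_ge0.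
rewrite expg1n; apply: lt_le_trans; apply: exprn_gt0; exact: y1_pos.
Qed.

Lemma BsM i a b : a \in Bs i -> b \in Bs i -> (a * b)%g \in Bs i.+1.
Proof.
rewrite !suppE => ha hb; rewrite expnS mul2n -addnn gpD gt_eqF //.
apply: lt_le_trans (gm_pos a b (gp_ge0 _ y_ge0) (gp_ge0 _ y_ge0)).
by apply: mulr_gt0; apply: pos_of_ne0 => //; apply: gp_ge0; exact: y_ge0.
Qed.

Lemma Bs_mono i : Bs i \subset Bs i.+1.
Proof. by apply/fintype.subsetP => a ha; rewrite -(mulg1 a); apply: BsM => //; exact: Bs1. Qed.

Lemma Bs_mono_add i k : Bs i \subset Bs (k + i).
Proof.
elim: k => [|k IH]; first by apply/fintype.subsetP.
by rewrite addSn; exact: fintype.subset_trans IH (Bs_mono _).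
Qed.

Lemma Bs_mono_le i j : (i <= j)%N -> Bs i \subset Bs j.
Proof.
by move/subnK <-; exact: Bs_mono_add.
Qed.

Lemma Bs_stable : exists i, Bs i.+1 \subset Bs i.
Proof.
apply: contrapT => hn.
have hc : forall i, (i <= #|Bs i|)%N.
  elim => [|i IH] //; apply: leq_ltn_trans IH _; apply: proper_card.
  rewrite properE Bs_mono /=; apply/negP => hs; apply: hn; by exists i.
by have := leq_trans (hc #|gT|.+1) (max_card _); rewrite ltnn.
Qed.

Lemma Bs_gen : exists i, (H \subset Bs i).
Proof.
have [i hi] := Bs_stable.
have hg : group_set (Bs i).
  apply/group_setP; split; first exact: Bs1.
  by move=> a b ha hb; apply: (fintype.subsetP hi); apply: BsM.
exists i; rewrite /G_x /= (gen_subG _ (Group hg)) /=.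
have := Bs_mono_le (leq0n i); rewrite /Bs expn0.
move=> h; apply: fintype.subset_trans h; apply/fintype.subsetP => g.
by rewrite !inE /= gm1r.
Qed.

End GC.


Section GD.
Local Open Scope ring_scope.

Variables (R : realType) (gT : finGroupType).
Local Notation ga := (ga R gT).
Variable x : ga.
Hypothesis hx0 : gnn x.
Hypothesis hx1 : gsum x = 1.

Local Notation n := (n_x x).
Local Notation y := (ga_pow x n).
Local Notation H := (G_x x).
Local Notation c := (c_x x).

Lemma cE g : c g = if g \in H then (#|H|%:R)^-1 else 0.
Proof. by rewrite ffunE. Qed.

Lemma conj_in s w : x s != 0 -> w \in supp y -> (s * w * s^-1)%g \in H.
Proof.
move=> hs; rewrite suppE => hw.
have [n0 hn] := nx_spec hx0 hx1.
have en : n = (n.-1).+1 by rewrite prednK.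
have [t [ht _]] : exists t, ga_pow x n.-1 t != 0 /\ x (t^-1 * 1)%g != 0.
  by apply: gm_supp; rewrite -gpSr -en.
have hsp : 0 < x s by apply: pos_of_ne0.
have hwp : 0 < y w by apply: pos_of_ne0 => //; apply: gp_ge0.
have htp : 0 < ga_pow x n.-1 t by apply: pos_of_ne0 => //; apply: gp_ge0.
have h1 : (s * w * t)%g \in H.
  apply: (@supp_xnj _ _ x 2); rewrite gt_eqF //.
  have -> : ga_pow x (n * 2) = ga_mul (ga_mul x y) (ga_pow x n.-1).
    by rewrite -gpS -gpD addSn -addnS -en addnn muln2.
  apply: lt_le_trans (gm_pos _ _ (gm_ge0 hx0 (gp_ge0 _ hx0)) (gp_ge0 _ hx0)).
  apply: mulr_gt0 => //; apply: lt_le_trans (gm_pos _ _ hx0 (gp_ge0 _ hx0)).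
  exact: mulr_gt0.
have h2 : (s * t)%g \in H.
  apply: (@supp_xnj _ _ x 1); rewrite muln1 gt_eqF // en gpS.
  apply: lt_le_trans (gm_pos _ _ hx0 (gp_ge0 _ hx0)); exact: mulr_gt0.
have -> : (s * w * s^-1 = (s * w * t) * (s * t)^-1)%g.
  by rewrite invMg mulgA mulgK.
by rewrite groupM // groupV.
Qed.

Lemma HJ s : x s != 0 -> (H :^ s^-1)%g = H.
Proof.
move=> hs; apply/eqP; rewrite eqEcard cardJg leqnn andbT.
rewrite /G_x /= -genJ gen_subG; apply/fintype.subsetP => g.
rewrite mem_conjg invgK => hg.
by have := @conj_in s _ hs hg; rewrite conjgE mulKVg mulgK.
Qed.

Lemma memHconj h g : x h != 0 -> ((h^-1 * g)%g \in H) = ((g * h^-1)%g \in H).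
Proof.
move=> hh; have -> : (g * h^-1 = (h^-1 * g) ^ h^-1)%g.
  by rewrite conjgE invgK mulgA mulKVg.
by rewrite -{2}(HJ hh) memJ_conjg.
Qed.

Lemma sum_rev (F : gT -> R) g : \sum_(h : gT) F h = \sum_(h : gT) F (g * h^-1)%g.
Proof.
apply: reindex_inj => a b /mulgI; exact: invg_inj.
Qed.

Lemma xc_comm : ga_mul x c = ga_mul c x.
Proof.
apply/ffunP => g; rewrite !gmE (sum_rev (fun h => c h * x (h^-1 * g)%g) g).
apply: eq_bigr => h _; rewrite invMg invgK mulgVK.
have [->|hh] := eqVneq (x h) 0; first by rewrite mul0r mulr0.
by rewrite !cE memHconj // mulrC.
Qed.

Definition suppH (v : ga) := forall g, v g != 0 -> g \in H.

Lemma mul_c_r v : suppH v -> ga_mul v c = gscale (gsum v) c.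
Proof.
move=> hv; apply/ffunP => g; rewrite gmE !ffunE /gsum big_distrl /=.
apply: eq_bigr => h _.
have [->|hh] := eqVneq (v h) 0; first by rewrite !mul0r.
by rewrite !ffunE groupMl ?groupV //; apply: hv.
Qed.

Lemma mul_c_l v : suppH v -> ga_mul c v = gscale (gsum v) c.
Proof.
move=> hv; apply/ffunP => g; rewrite gmE !ffunE /gsum big_distrl /=.
rewrite (sum_rev (fun h => c h * v (h^-1 * g)%g) g).
apply: eq_bigr => h _ /=; rewrite invMg invgK mulgVK.
have [->|hh] := eqVneq (v h) 0; first by rewrite mulr0 mul0r.
by rewrite !ffunE groupMr ?groupV 1?mulrC //; apply: hv.
Qed.

Lemma c_suppH : suppH c.
Proof. by move=> g; rewrite cE; case: ifP => //; rewrite eqxx. Qed.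

Lemma c_gnn : gnn c.
Proof. by move=> g; rewrite cE; case: ifP. Qed.

Lemma gsum_c : gsum c = 1.
Proof.
rewrite /gsum; under eq_bigr do rewrite cE.
rewrite -big_mkcond /= sumr_const -[_ *+ _]mulr_natr mulVf //.
by rewrite pnatr_eq0 -lt0n cardG_gt0.
Qed.

Lemma gscale1 (v : ga) : gscale 1 v = v.
Proof. by apply/ffunP => g; rewrite ffunE mul1r. Qed.

Lemma cc : ga_mul c c = c.
Proof. by rewrite mul_c_r ?gsum_c ?gscale1 //; exact: c_suppH. Qed.

Lemma pow_xc k : ga_pow (ga_mul x c) k.+1 = ga_mul (ga_pow x k.+1) c.
Proof. apply: gp_mulc; [exact: xc_comm | exact: cc]. Qed.

End GD.


Section GE.
Local Open Scope ring_scope.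

Variables (R : realType) (gT : finGroupType).
Local Notation ga := (ga R gT).
Variable x : ga.
Hypothesis hx0 : gnn x.
Hypothesis hx1 : gsum x = 1.

Local Notation n := (n_x x).
Local Notation y := (ga_pow x n).
Local Notation H := (G_x x).
Local Notation c := (c_x x).

Lemma decay : exists (M : nat) (rho : R), (0 < M)%N /\ 0 <= rho < 1 /\
  forall k g, `|ga_pow x k g - ga_mul (ga_pow x k) c g| <= 2 * rho ^+ (k %/ M).
Proof.
have [n0 _] := nx_spec hx0 hx1.
have [i hi] := Bs_gen hx0 hx1.
pose M := (n * 2 ^ i)%N.
pose z := ga_pow x M.
have z0 : gnn z by apply: gp_ge0.
have z1 : gsum z = 1 by apply: gsum_pow.
have zH : suppH x z by move=> g; apply: supp_xnj.
have Hz : forall h, h \in H -> 0 < z h.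
  move=> h /(fintype.subsetP hi); rewrite /Bs suppE -gpM => hn.
  exact: pos_of_ne0.
pose m := \prod_(h in H) z h.
have m0 : 0 < m by apply: prodr_gt0 => h hh; apply: Hz.
have mz : forall h, h \in H -> m <= z h.
  move=> h hh; rewrite /m (bigD1 h) //=; apply: ler_piMr; first exact: z0.
  apply: prodr_ile1 => j _; rewrite z0 /=; exact: coord_le1.
pose d := #|H|%:R * m.
have Hn0 : (#|H|%:R : R) != 0 by rewrite pnatr_eq0 -lt0n cardG_gt0.
have dc : forall g, d * c g = if g \in H then m else 0.
  move=> g; rewrite cE; case: ifP => _; last by rewrite mulr0.
  by rewrite /d mulrAC mulfV // mul1r.
pose E := gsub z (gscale d c).
have E0 : gnn E.
  move=> g; rewrite [E g]ffunE [gscale _ _ _]ffunE dc; case: ifP => hg; last by rewrite subr0.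
  by rewrite subr_ge0; apply: mz.
have Es : gsum E = 1 - d.
  rewrite /gsum; under eq_bigr do rewrite [E _]ffunE [gscale _ _ _]ffunE.
  by rewrite sumrB -big_distrr /= -/(gsum z) -/(gsum c) z1 gsum_c // mulr1.
have d0 : 0 < d by apply: mulr_gt0 => //; rewrite ltr0n cardG_gt0.
have d1 : 0 <= 1 - d by rewrite -Es; apply: sumr_ge0 => g _; apply: E0.
have zc : ga_mul z c = c by rewrite mul_c_r // z1 gscale1.
have cz : ga_mul c z = c by rewrite mul_c_l // z1 gscale1.
have zqc : forall q, ga_mul (ga_pow z q) c = c.
  elim => [|q IH]; first by rewrite gp0 gm1l.
  by rewrite gpS gmA IH zc.
pose D q := gsub (ga_pow z q) c.
have Drec : forall q, D q.+1 = ga_mul (D q) E.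
  move=> q; rewrite /D /E gmBl !gmBr !gmZr zqc cz cc // -gpSr.
  apply/ffunP => g; rewrite !ffunE.
  by rewrite opprB addrA subrK.
have Dbound : forall q, gl1 (D q) <= 2 * (1 - d) ^+ q.
  elim => [|q IH].
    rewrite expr0 mulr1 /D gp0; apply: le_trans (gl1_sub _ _) _.
    rewrite !gl1_ge0_msum ?msum_one ?gsum_one ?gsum_c //; try exact: one_ge0.
    exact: c_gnn.
  rewrite Drec; apply: le_trans (gl1_mul _ _) _.
  rewrite (gl1_ge0_msum E0) Es exprSr mulrA.
  by apply: ler_wpM2r.
exists M, (1 - d); split; first by rewrite muln_gt0 n0 expn_gt0.
split; first by rewrite d1 /= ltrBlDr ltrDl.
move=> k g.
set q := (k %/ M)%N; set r := (k %% M)%N.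
have ek : k = (r + M * q)%N by rewrite addnC mulnC /q /r -divn_eq.
rewrite {1 2}ek gpD gpM -/z gmA zqc.
have <- : ga_mul (ga_pow x r) (D q) g = ga_mul (ga_pow x r) (ga_pow z q) g - ga_mul (ga_pow x r) c g.
  by rewrite /D gmBr ffunE.
apply: le_trans (coord_le_l1 _ _) _; apply: le_trans (gl1_mul _ _) _.
rewrite gl1_ge0_msum ?gsum_pow ?mul1r //; exact: gp_ge0.
Qed.

End GE.


Section GF.
Local Open Scope ring_scope.

Variables (R : realType).

Lemma geo_floor (rho : R) (M K : nat) : 0 <= rho -> rho < 1 -> (0 < M)%N ->
  \sum_(0 <= k < K) rho ^+ (k %/ M) <= M%:R / (1 - rho).
Proof.
move=> r0 r1 M0.
have hQ : forall Q, (\sum_(0 <= k < Q * M) rho ^+ (k %/ M)) * (1 - rho)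
                    = M%:R * (1 - rho ^+ Q).
  elim => [|Q IH]; first by rewrite mul0n big_geq // mul0r expr0 subrr mulr0.
  rewrite mulSn addnC (big_cat_nat _ (n := (Q * M)%N)) ?leq_addr //= mulrDl IH.
  rewrite -{1}(add0n (Q * M)%N) big_addn addKn.
  rewrite (eq_big_nat _ _ (F2 := fun=> rho ^+ Q)); last first.
    by move=> i /andP[_ hi]; rewrite addnC divnMDl // divn_small // addn0.
  rewrite sumr_const_nat subn0 -mulr_natl exprS; ring.
have pos : 0 < 1 - rho by rewrite subr_gt0.
apply: (@le_trans _ _ (\sum_(0 <= k < K * M) rho ^+ (k %/ M))).
  rewrite [X in _ <= X](big_cat_nat _ (n := K)) //= ?leq_pmulr // lerDl.
  by apply: sumr_ge0 => k _; exact: exprn_ge0.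
rewrite ler_pdivlMr // hQ ler_piMr ?ler0n // lerBlDr lerDl.
exact: exprn_ge0.
Qed.

End GF.


Section GG.
Local Open Scope ring_scope.

Variables (R : realType) (gT : finGroupType).
Local Notation ga := (ga R gT).

Lemma ser_cvg (a : nat -> R) (w : nat -> R) : cvgn (series (fun k => `|a k|)) ->
  (forall k, `|w k| <= 1) -> cvgn (series (fun k => a k * w k)).
Proof.
move=> ha hw; apply: normed_cvg.
apply: (series_le_cvg (v_ := fun k => `|a k|)) => //= k.
by rewrite normrM; apply: ler_piMr.
Qed.

Lemma coord_abs1 (v : ga) g : gnn v -> gsum v = 1 -> `|v g| <= 1.
Proof. by move=> h0 h1; rewrite ger0_norm //; apply: coord_le1. Qed.

Lemma diff_bound (x : ga) (hx0 : gnn x) (hx1 : gsum x = 1) :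
  exists C : R, 0 <= C /\ forall (a : nat -> R), cvgn (series (fun k => `|a k|)) ->
  forall s, 0 <= s -> (forall k, (1 <= k)%N -> `|a k| <= s) ->
  forall g, `|peval a x g - peval a (ga_mul x (c_x x)) g| <= s * C.
Proof.
have [M [rho [M0 [/andP[r0 r1] hd]]]] := decay hx0 hx1.
have pos : 0 < 1 - rho by rewrite subr_gt0.
exists (2 * (M%:R / (1 - rho))); split.
  by apply: mulr_ge0 => //; apply: divr_ge0 => //; apply: ltW.
move=> a ha s s0 hs g.
have xc0 : gnn (ga_mul x (c_x x)) by apply: gm_ge0 => //; apply: c_gnn.
have xc1 : gsum (ga_mul x (c_x x)) = 1 by rewrite gsum_mul hx1 gsum_c // mulr1.
pose w1 k := ga_pow x k g.
pose w2 k := ga_pow (ga_mul x (c_x x)) k g.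
have c1 : cvgn (series (fun k => a k * w1 k)).
  apply: ser_cvg => // k; apply: coord_abs1; [exact: gp_ge0 | exact: gsum_pow].
have c2 : cvgn (series (fun k => a k * w2 k)).
  apply: ser_cvg => // k; apply: coord_abs1; [exact: gp_ge0 | exact: gsum_pow].
have dk : forall k, `|w1 k - w2 k| <= 2 * rho ^+ (k %/ M).
  case => [|k]; first by rewrite /w1 /w2 subrr normr0; apply: mulr_ge0 => //; apply: exprn_ge0.
  by rewrite /w2 pow_xc //; apply: hd.
have w1b : forall k, 0 <= w1 k <= 1.
  by move=> k; rewrite /w1 gp_ge0 //= coord_le1 //; [exact: gp_ge0 | exact: gsum_pow].
have w2b : forall k, 0 <= w2 k <= 1.
  by move=> k; rewrite /w2 gp_ge0 //= coord_le1 //; [exact: gp_ge0 | exact: gsum_pow].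
have cn : cvgn [normed series ((fun k => a k * w1 k) - (fun k => a k * w2 k))].
  apply: (series_le_cvg (v_ := fun k => `|a k|)) => //= k.
  rewrite -mulrBr normrM; apply: ler_piMr => //.
  have := w1b k; have := w2b k; rewrite ler_norml => /andP[h1 h2] /andP[h3 h4].
  have -> : (w1 - w2) k = w1 k - w2 k by [].
  by apply/andP; split; lra.
rewrite /peval !ffunE -/w1 -/w2 -lim_seriesB //.
apply: le_trans (lim_series_norm cn) _.
apply: limr_le; first exact: cn.
apply: nearW => K /=.
rewrite /series /=.
apply: (@le_trans _ _ (\sum_(0 <= k < K) s * (2 * rho ^+ (k %/ M)))).
  apply: ler_sum => k _.
  have -> : ((fun k => a k * w1 k) - (fun k => a k * w2 k)) k = a k * (w1 k - w2 k).
    by rewrite mulrBr.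
  rewrite normrM; case: k => [|k].
    by rewrite /w1 /w2 subrr normr0 mulr0; apply: mulr_ge0 => //; apply: mulr_ge0 => //; apply: exprn_ge0.
  by apply: ler_pM => //; apply: hs.
rewrite -big_distrr -big_distrr /=; apply: ler_wpM2l => //; apply: ler_wpM2l => //.
exact: geo_floor.
Qed.
End GG.


Unset Implicit Arguments. Set Strict Implicit.
Local Open Scope ring_scope.
Local Open Scope classical_set_scope.

Theorem lemma3 (R : realType) (gT : finGroupType) (a : nat -> nat -> R)
  (habs : forall n, cvgn (series (fun k => `|a n k|)))
  (hsup : (fun n => sup [set `|a n k| | k in [set k : nat | (1 <= k)%N]])
            @ \oo --> (0 : R))
  (x : ga R gT) (hx : in_S x) :
  let u := fun n => peval (a n) x in
  let v := fun n => peval (a n) (ga_mul x (c_x x)) in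
  (~ (exists L, ga_cvg u L) /\ ~ (exists L, ga_cvg v L)) \/
  (exists L, ga_cvg u L /\ ga_cvg v L).
Proof.
move=> u v.
case: hx => hx1 hx0.
have [C [C0 hC]] := @diff_bound R gT x hx0 hx1.
set s := fun n => sup [set `|a n k| | k in [set k : nat | (1 <= k)%N]].
have sub : forall n k, (1 <= k)%N -> `|a n k| <= s n.
  move=> n k hk.
  have hub : has_ubound [set `|a n k| | k in [set k : nat | (1 <= k)%N]].
    exists (limn (series (fun k => `|a n k|))) => _ [j _ <-].
    have hnd : nondecreasing_seq (series (fun k => `|a n k|)).
      apply/nondecreasing_seqP => m; rewrite /series /= big_nat_recr //=.
rewrite -subr_ge0 addrAC subrr add0r; exact: normr_ge0.
    apply: le_trans (nondecreasing_cvgn_le hnd (habs n) j.+1).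
    by rewrite /series /= big_nat_recr //= lerDr sumr_ge0 // => i _; exact: normr_ge0.
  by apply: ub_le_sup => //; exists k.
have s0 : forall n, 0 <= s n by move=> n; apply: le_trans (sub n 1%N isT); exact: normr_ge0.
have hd : forall g, (fun n => u n g - v n g) @ \oo --> (0 : R).
  move=> g.
  have hsc : (fun n => s n * C) @ \oo --> (0 : R).
    by rewrite -(mul0r C); apply: cvgM => //; exact: cvg_cst.
  apply: (squeeze_cvgr (f := fun n => - (s n * C)) (h := fun n => s n * C)).
  - apply: nearW => n; rewrite -ler_norml; exact: (hC (a n) (habs n) (s n) (s0 n) (sub n) g).
  - by rewrite -oppr0; apply: cvgN.
  - exact: hsc.
case: (pselect (exists L, ga_cvg u L)) => [[L hL]|hn].
  right; exists L; split => // g.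
  have -> : (fun n => v n g) = (fun n => u n g - (u n g - v n g)).
    by apply: funext => n; rewrite opprB addrC subrK.
  by rewrite -(subr0 (L g)); apply: cvgB; [exact: hL | exact: hd].
left; split => // -[L hL]; apply: hn; exists L => g.
have -> : (fun n => u n g) = (fun n => v n g + (u n g - v n g)).
  by apply: funext => n; rewrite addrC subrK.
by rewrite -(addr0 (L g)); apply: cvgD; [exact: hL | exact: hd].
Qed.
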